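(* Let $S=\{1,\dots,n\}$ (servers) and $C=\{1,\dots,m\}$ (contents), let $U_s>0$ and integers $d_s\ge 1$ be given for $s\in S$, and let $\lambda_c\ge 0$ be given for $c\in C$. Let $\mathcal{A}$ be the set of binary matrices $A=(a_{sc})\in\{0,1\}^{S\times C}$ with $\sum_{c\in C}a_{sc}\le d_s$ for all $s\in S$. For $A\in\mathcal{A}$, let $\mathcal{B}(A,\Lambda)$ be the set of matrices $B=(b_{sc})_{s\in S,c\in C}$ with nonnegative real entries satisfying $\sum_{c\in C}b_{sc}\le U_s$ for all $s\in S$, $\sum_{s\in S}b_{sc}\le \lambda_c$ for all $c\in C$, and $\mathbb{1}(b_{sc}>0)\le a_{sc}$ for all $(s,c)$. Consider \[ \text{(P1)}\qquad \max_{A\in\mathcal{A}}\ \max_{B\in\mathcal{B}(A,\Lambda)}\ \sum_{s\in S}\sum_{c\in C} b_{sc}, \] and \[ \text{(P2)}\qquad \max_{Z=(z_{sc})}\ \sum_{s\in S}\sum_{c\in C} z_{sc}\quad\text{s.t. } \sum_{c\in C}z_{sc}\le U_s\ \forall s,\ \ \sum_{s\in S}z_{sc}\le\lambda_c\ \forall c,\ \ \sum_{c\in C}\mathbb{1}(z_{sc}>0)\le d_s\ \forall s,\ \ z_{sc}\in\mathbb{R}_+ . \] Then problems (P1) and (P2) are equivalent (in particular, they have the same optimal value). Furthermore, if $Z^*=(z^*_{sc})$ is an optimal solution of (P2), then the matrix $A^*$ defined by $a^*_{sc}=\mathbb{1}(z^*_{sc}>0)$ for all $(s,c)\in S\times C$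 is an optimal solution (optimal allocation) of (P1).
   Context: $\mathbb{1}(\cdot)$ denotes the indicator function. $\Lambda=(\lambda_c)_{c\in C}$ is the vector of content popularities (arrival rates). $a_{sc}=1$ means content $c$ is stored in the cache of server $s$; $b_{sc}$ is the amount of requests of content $c$ matched to server $s$. *)

(* Defs.v *)
From mathcomp Require Import all_boot all_order all_algebra.
From mathcomp Require Import reals.
Set Implicit Arguments. Unset Strict Implicit. Unset Printing Implicit Defensive.
Import Order.TTheory GRing.Theory Num.Theory.
Local Open Scope ring_scope.

Definition ind (P : bool) : nat := P.

Section Caching.
Variables (R : realType) (n m : nat).
Variables (U : 'I_n -> R) (d : 'I_n -> nat) (lam : 'I_m -> R).

Definition allocA (A : 'M[bool]_(n, m)) : Prop :=
  forall s : 'I_n, (\sum_(c < m) ind (A s c) <= d s)%N.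

Definition matchB (A : 'M[bool]_(n, m)) (B : 'M[R]_(n, m)) : Prop :=
  [/\ forall s c, 0 <= B s c,
      forall s : 'I_n, \sum_(c < m) B s c <= U s,
      forall c : 'I_m, \sum_(s < n) B s c <= lam c
    & forall s c, (ind (0 < B s c)%R <= ind (A s c))%N].

Definition obj (B : 'M[R]_(n, m)) : R := \sum_(s < n) \sum_(c < m) B s c.

Definition feasP1 (A : 'M[bool]_(n, m)) (B : 'M[R]_(n, m)) : Prop :=
  allocA A /\ matchB A B.

Definition feasP2 (Z : 'M[R]_(n, m)) : Prop :=
  [/\ forall s c, 0 <= Z s c,
      forall s : 'I_n, \sum_(c < m) Z s c <= U s,
      forall c : 'I_m, \sum_(s < n) Z s c <= lam c
    & forall s : 'I_n, (\sum_(c < m) ind (0 < Z s c)%R <= d s)%N].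

Definition optP2 (Z : 'M[R]_(n, m)) : Prop :=
  feasP2 Z /\ forall Z', feasP2 Z' -> obj Z' <= obj Z.

Definition opt_alloc_P1 (A : 'M[bool]_(n, m)) : Prop :=
  allocA A /\ exists B, matchB A B /\
    forall A' B', feasP1 A' B' -> obj B' <= obj B.

End Caching.

(* Main.v *)
Require Import Defs.
From mathcomp Require Import all_boot all_order all_algebra.
From mathcomp Require Import reals.
Import Order.TTheory GRing.Theory Num.Theory.
Local Open Scope ring_scope.

Theorem proposition1 (R : realType) (n m : nat)
  (U : 'I_n -> R) (d : 'I_n -> nat) (lam : 'I_m -> R)
  (hU : forall s, 0 < U s) (hd : forall s, (1 <= d s)%N)
  (hlam : forall c, 0 <= lam c) :
  (* (P1) and (P2) have exactly the same set of attainable objective values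
     (hence the same optimal value), and optima correspond *)
  (forall v : R,
     (exists A B, feasP1 U d lam A B /\ obj B = v) <->
     (exists Z, feasP2 U d lam Z /\ obj Z = v)) /\
  (forall Z : 'M[R]_(n, m), optP2 U d lam Z ->
     opt_alloc_P1 U d lam (\matrix_(s, c) (0 < Z s c))).
Proof.
have h12 : forall A B, feasP1 U d lam A B -> feasP2 U d lam B.
  move=> A B [hA [h1 h2 h3 h4]]; split => // s.
  apply: leq_trans (hA s); apply: leq_sum => c _; exact: h4.
have h21 : forall Z, feasP2 U d lam Z ->
    feasP1 U d lam (\matrix_(s, c) (0 < Z s c)) Z.
  move=> Z [h1 h2 h3 h4]; split.
    move=> s; under eq_bigr => c _ do rewrite mxE; exact: h4.
  split => // s c; rewrite mxE; exact: leqnn.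
split.
  move=> v; split.
    by move=> [A [B [hf hv]]]; exists B; split => //; exact: h12 hf.
  move=> [Z [hf hv]]; exists (\matrix_(s, c) (0 < Z s c)), Z; split => //.
  exact: h21.
move=> Z [hf hopt].
have [hA hB] := h21 Z hf.
split => //; exists Z; split => // A' B' hf'.
apply: hopt; exact: h12 hf'.
Qed.
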